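(* For every $n\in\mathbb{N}$, with $d=\lfloor \frac{n-1}{2}\rfloor$, $$\iota^{d}(2^n-1)\leq n+\iota(n).$$
   Context: An addition chain producing $N$ is a sequence $1,2,s_3,\ldots,s_k=N$ in which every term after the first is the sum of two (not necessarily distinct) earlier terms; its length is the number of terms excluding the initial $1$; $\iota(N)$ is the length of the shortest addition chain producing $N$. An addition chain of degree $d$ producing $N$ is a sequence $1,2,s_3,\ldots,s_k=N$ (with $2=1+1$) in which each term $s_j$, $j\geq 3$, is the sum of at most $d$ earlier terms of the sequence; its length is again the number of terms excluding the initial $1$. $\iota^{d}(N)$ denotes the length of the shortest addition chain of degree $d$ producing $N$. $\lfloor\cdot\rfloor$ is the floor function. *)

(* Defs.v *)
From mathcomp Require Import all_boot.
Set Implicit Arguments. Unset Strict Implicit. Unset Printing Implicit Defensive.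

(* A sequence is represented by the list c = [:: s_1; s_2; ...; s_k] with
   s_1 = 1 (the initial 1).  Its length is the number of terms excluding the
   initial 1, i.e. (size c).-1.  It produces N when its last term is N. *)

Definition addition_chain (c : seq nat) : Prop :=
  nth 0 c 0 = 1 /\
  forall j, 0 < j < size c ->
    exists i l, i < j /\ l < j /\ nth 0 c j = nth 0 c i + nth 0 c l.

Definition addition_chain_deg (d : nat) (c : seq nat) : Prop :=
  nth 0 c 0 = 1 /\ 1 < size c /\ nth 0 c 1 = 2 /\
  forall j, 1 < j < size c ->
    exists idx : seq nat, 0 < size idx <= d /\ all (fun i => i < j) idx /\
      nth 0 c j = sumn (map (nth 0 c) idx).

Definition chain_length (c : seq nat) : nat := (size c).-1.

Definition produces (c : seq nat) (N : nat) : Prop := last 0 c = N.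

Definition is_iota (N m : nat) : Prop :=
  (exists c, addition_chain c /\ produces c N /\ chain_length c = m) /\
  (forall c, addition_chain c -> produces c N -> m <= chain_length c).

Definition is_iota_deg (d N m : nat) : Prop :=
  (exists c, addition_chain_deg d c /\ produces c N /\ chain_length c = m) /\
  (forall c, addition_chain_deg d c -> produces c N -> m <= chain_length c).

(* Main.v *)
Require Import Defs.
From mathcomp Require Import all_boot.
From mathcomp Require Import zify.
From Stdlib Require Import Classical.

Lemma min_exists (P : seq nat -> Prop) L :
  (exists c, P c /\ chain_length c = L) ->
  exists k, k <= L /\ (exists c, P c /\ chain_length c = k) /\
    (forall c, P c -> k <= chain_length c).
Proof.
elim: L {-2}L (leqnn L) => [|L IH] L' HL [c [Pc Hc]].
  exists 0; split => //; split; first by exists c; split => //; lia.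
  by move=> c' _.
destruct (classic (exists c', P c' /\ chain_length c' < L')) as [[c' [Pc' Hc']]|H].
  have [k [Hk [Hex Hmin]]] := IH (chain_length c') ltac:(lia) (ex_intro _ c' (conj Pc' erefl)).
  exists k; split; first lia; by split.
exists L'; split => //; split; first by exists c.
move=> c' Pc'; case: (leqP L' (chain_length c')) => // Hlt.
by exfalso; apply: H; exists c'.
Qed.

Lemma chain_bound c : addition_chain c -> forall j, j < size c -> nth 0 c j <= 2 ^ j.
Proof.
move=> [H0 H] j0; suff: forall m j, j <= m -> j < size c -> nth 0 c j <= 2 ^ j by apply.
elim=> [|m IH] j Hj Hs.
  by move: Hj; rewrite leqn0 => /eqP ->; rewrite H0.
case: j Hj Hs => [|j] Hj Hs; first by rewrite H0.
have [i [l [Hi [Hl ->]]]] := H j.+1 ltac:(lia).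
have Ei := IH i ltac:(lia) ltac:(lia).
have El := IH l ltac:(lia) ltac:(lia).
have : 2 ^ i <= 2 ^ j by rewrite leq_exp2l; lia.
have : 2 ^ l <= 2 ^ j by rewrite leq_exp2l; lia.
rewrite expnS; lia.
Qed.

Lemma last_bound c N : addition_chain c -> produces c N -> 0 < N -> N <= 2 ^ chain_length c.
Proof.
move=> Hc; rewrite /produces /chain_length => <-.
case: c Hc => [|x c] Hc //= _.
have := @chain_bound (x :: c) Hc (size c) (ltnSn _).
by rewrite (last_nth 0).
Qed.

Lemma iota_chain n : 0 < n -> addition_chain (iota 1 n) /\ produces (iota 1 n) n /\ chain_length (iota 1 n) = n.-1.
Proof.
move=> n0; split; [split|split].
- by rewrite nth_iota.
- move=> j; rewrite size_iota => /andP[j0 jn].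
  exists j.-1, 0; split; first lia; split; first lia.
  rewrite !nth_iota //; lia.
- rewrite /produces -(nth_last 0) size_iota nth_iota; lia.
- by rewrite /chain_length size_iota.
Qed.

Definition C n (A : seq nat) : seq nat :=
  [seq 2 ^ k | k <- iota 0 n] ++ [seq 2 ^ a - 1 | a <- A].

Lemma size_C n A : size (C n A) = n + size A.
Proof. by rewrite size_cat !size_map size_iota. Qed.

Lemma nthC_lo n A k : k < n -> nth 0 (C n A) k = 2 ^ k.
Proof.
move=> kn; rewrite nth_cat size_map size_iota kn (nth_map 0) ?size_iota //.
by rewrite nth_iota.
Qed.

Lemma nthC_hi n A t : t < size A -> nth 0 (C n A) (n + t) = 2 ^ (nth 0 A t) - 1.
Proof.
move=> tA; rewrite nth_cat size_map size_iota ltnNge leq_addr /=.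
by rewrite addKn (nth_map 0).
Qed.

Lemma sum_pow a m : sumn [seq 2 ^ k | k <- iota a m] + 2 ^ a = 2 ^ (a + m).
Proof.
elim: m a => [|m IH] a /=; first by rewrite addn0.
have := IH a.+1; rewrite expnS addSnnS => <-; lia.
Qed.

Lemma sumC n A a m : a + m <= n ->
  sumn (map (nth 0 (C n A)) (iota a m)) + 2 ^ a = 2 ^ (a + m).
Proof.
move=> H; rewrite -sum_pow; congr (sumn _ + _).
apply/eq_in_map => x; rewrite mem_iota => Hx; apply: nthC_lo; lia.
Qed.

Lemma deg_chain_gen n d A : 2 <= n -> 2 <= d -> 0 < size A ->
  (forall t, t < size A -> nth 0 A t <= n) -> 0 < nth 0 A 0 <= d ->
  (forall t, 0 < t < size A -> nth 0 A t.-1 <= nth 0 A t <= nth 0 A t.-1 + d.-1) ->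
  addition_chain_deg d (C n A).
Proof.
move=> n2 d2 A0 HAn HA0 HAs.
split; first by rewrite nthC_lo //; lia.
split; first by rewrite size_C; lia.
split; first by rewrite nthC_lo //; lia.
move=> j /andP[j1]; rewrite size_C => jlt.
case: (ltnP j n) => jn.
  exists [:: j.-1; j.-1]; split; first by rewrite /=; lia.
  split; first by rewrite /= andbT; lia.
  rewrite /= !nthC_lo; try lia.
  have -> : j = (j.-1).+1 by lia.
  rewrite expnS /=; lia.
have -> : j = n + (j - n) by lia.
have tA : j - n < size A by lia.
move: (j - n) tA => t tA.
rewrite nthC_hi //.
case: t tA => [|t] tA.
  exists (iota 0 (nth 0 A 0)); split; first by rewrite size_iota; lia.
  split; first by apply/allP => x; rewrite mem_iota; have := HAn 0 tA; lia.
  have := @sumC n A 0 (nth 0 A 0) (HAn 0 tA); rewrite add0n expn0; lia.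
have [H1 H2] := andP (HAs t.+1 ltac:(lia)).
rewrite /= in H1 H2.
exists ((n + t) :: iota (nth 0 A t) (nth 0 A t.+1 - nth 0 A t)).
split; first by rewrite /= size_iota; lia.
split.
  rewrite /= ltn_add2l ltnSn /=.
  by apply/allP => x; rewrite mem_iota; have := HAn _ tA; lia.
rewrite /= nthC_hi; last lia.
have := HAn _ tA => Hn.
have := @sumC n A (nth 0 A t) (nth 0 A t.+1 - nth 0 A t) ltac:(lia).
have -> : nth 0 A t + (nth 0 A t.+1 - nth 0 A t) = nth 0 A t.+1 by lia.
have : 0 < 2 ^ nth 0 A t by rewrite expn_gt0.
lia.
Qed.

Definition c6 : seq nat := [:: 1; 2; 3; 6; 12; 15; 30; 60; 63].

Lemma c6_chain : addition_chain_deg 2 c6 /\ produces c6 (2 ^ 6 - 1) /\ chain_length c6 = 8.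
Proof.
split; last by [].
split; first by []. split; first by []. split; first by [].
move=> j /andP[j1 j9].
case: j j1 j9 => [|[|[|[|[|[|[|[|[|j]]]]]]]]] //= _ _.
- by exists [:: 0; 1].
- by exists [:: 2; 2].
- by exists [:: 3; 3].
- by exists [:: 4; 2].
- by exists [:: 5; 5].
- by exists [:: 6; 6].
- by exists [:: 7; 2].
Qed.

Theorem mainTheorem14 (n : nat) :
  2 <= (n - 1) %/ 2 ->
  exists k i, is_iota n i /\ is_iota_deg ((n - 1) %/ 2) (2 ^ n - 1) k /\
    k <= n + i.
Proof.
move=> Hd.
have Hdiv := divn_eq (n - 1) 2.
have Hmod : (n - 1) %% 2 < 2 by rewrite ltn_mod.
move: Hd Hdiv Hmod; set d := (n - 1) %/ 2 => Hd Hdiv Hmod.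
have n5 : 5 <= n by lia.
have [i [_ [[c [[Hc Hp] Hl]] Hmin]]] :=
  @min_exists (fun c => addition_chain c /\ produces c n) n.-1
    (let: conj a (conj b e) := @iota_chain n ltac:(lia) in ex_intro _ _ (conj (conj a b) e)).
have i3 : 3 <= i.
  have := @last_bound c n Hc Hp ltac:(lia); rewrite Hl.
  case: (leqP 3 i) => // hi.
  have : 2 ^ i <= 2 ^ 2 by rewrite leq_exp2l; lia.
  rewrite (_ : 2 ^ 2 = 4) //; lia.
have Hiota : is_iota n i.
  split; first by exists c.
  by move=> c' H1 H2; apply: Hmin.
have [L [[c' [Hc' [Hp' HL]]] HLb]] : exists L, (exists c, addition_chain_deg d c /\ produces c (2 ^ n - 1) /\ chain_length c = L) /\ L <= n + i.
  case: (eqVneq n 6) => [E|E].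
    exists 8; split; last by lia.
    exists c6; rewrite /d E; exact: c6_chain.
  set A := [:: d; minn n (2 * d - 1); minn n (3 * d - 2); n].
  exists (n + 3); split; last by lia.
  exists (C n A); split; [|split].
  - apply: deg_chain_gen => //; try lia.
    + by move=> [|[|[|[|t]]]] //= _; lia.
    + by rewrite /=; lia.
    + by move=> [|[|[|[|t]]]] //= _; lia.
  - rewrite /produces -(nth_last 0) size_C /=.
    rewrite (_ : (n + 4).-1 = n + 3); last lia.
    by rewrite nthC_hi.
  - by rewrite /chain_length size_C /=; lia.
have [k [Hk [Hex Hmink]]] :=
  @min_exists (fun c => addition_chain_deg d c /\ produces c (2 ^ n - 1)) L
    (ex_intro _ c' (conj (conj Hc' Hp') HL)).
exists k, i; split => //; split; last by lia.
split; first by case: Hex => x [[? ?] ?]; exists x.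
by move=> x H1 H2; apply: Hmink.
Qed.
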